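(* Fix a positive integer $R$ and let $b_R(n)=1-\frac{1}{2^n}\sum_{k=0}^n\binom{n}{k}\max\big(\frac1R,2^{-\min(k,n-k)}\big)$. Then $\lim_{n\to\infty}b_R(n)=\frac{R-1}{R}$; consequently $\limsup_{n\to\infty}\sup\{\mathcal{C}(\ket{\psi}):\ket{\psi}\text{ an }n\text{-qubit pure state with }\mathrm{rk}(\ket{\psi})=R\}\le\frac{R-1}{R}$, i.e. asymptotically a state of CP rank $R$ has concentratable entanglement at most $\frac{R-1}{R}$.
   Context: The CP rank $\mathrm{rk}(\ket{\psi})$ of an $n$-qubit state is the minimal $r$ with $\ket{\psi}=\sum_{i=1}^r c_i\bigotimes_{j=1}^n\ket{\phi_i^{(j)}}$. The concentratable entanglement is $\mathcal{C}(\ket{\psi})=1-\frac{1}{2^{n}}\sum_{\alpha\subseteq [n]}\mathrm{Tr}[\rho_\alpha^2]$, with $\rho_\alpha$ the reduced state on $\alpha$ and $\mathrm{Tr}[\rho_\emptyset^2]=1$. *)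

(* Defs.v *)
From HB Require Import structures.
From mathcomp Require Import all_boot all_order all_algebra.
From mathcomp Require Import all_classical all_reals all_analysis.
From mathcomp Require Import complex.
Set Implicit Arguments. Unset Strict Implicit. Unset Printing Implicit Defensive.
Import Order.TTheory GRing.Theory Num.Theory.
Local Open Scope ring_scope.

Definition bR {R : realType} (Rk n : nat) : R :=
  1 - (2%:R ^+ n)^-1 *
      \sum_(0 <= k < n.+1)
        ('C(n, k))%:R * Num.max (Rk%:R^-1) ((2%:R ^+ minn k (n - k))^-1).

Definition bits (n : nat) := {ffun 'I_n -> bool}.

(* an n-qubit (unnormalized) vector: amplitudes on the computational basis *)
Definition qstate (R : realType) (n : nat) := bits n -> R[i].

Definition is_pure_state {R : realType} {n : nat} (psi : qstate R n) : Prop :=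
  \sum_(s : bits n) psi s * (psi s)^* = 1.

Definition prod_vec {R : realType} {n : nat} (phi : 'I_n -> bool -> R[i])
  : qstate R n := fun s => \prod_(j < n) phi j (s j).

Definition has_cp_decomp {R : realType} {n : nat} (psi : qstate R n) (r : nat)
  : Prop :=
  exists (c : 'I_r -> R[i]) (phi : 'I_r -> 'I_n -> bool -> R[i]),
    forall s, psi s = \sum_(i < r) c i * prod_vec (phi i) s.

Definition cp_rank_eq {R : realType} {n : nat} (psi : qstate R n) (r : nat)
  : Prop :=
  has_cp_decomp psi r /\ forall r', (r' < r)%N -> ~ has_cp_decomp psi r'.

(* basis strings vanishing outside S: these index the basis of the
   subsystem S *)
Definition supported {n : nat} (S : {set 'I_n}) (s : bits n) : bool :=
  [forall i, (i \notin S) ==> ~~ s i].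

Definition merge {n : nat} (A : {set 'I_n}) (a b : bits n) : bits n :=
  [ffun i => if i \in A then a i else b i].

(* reduced density matrix rho_A = Tr_{complement of A} |psi><psi|,
   entries indexed by basis strings of the subsystem A *)
Definition reduced_state {R : realType} {n : nat} (psi : qstate R n)
  (A : {set 'I_n}) (a a' : bits n) : R[i] :=
  \sum_(b : bits n | supported (~: A) b) psi (merge A a b) * (psi (merge A a' b))^*.

Definition purity {R : realType} {n : nat} (psi : qstate R n) (A : {set 'I_n})
  : R[i] :=
  \sum_(a : bits n | supported A a) \sum_(a' : bits n | supported A a')
     reduced_state psi A a a' * reduced_state psi A a' a.

(* concentratable entanglement; Tr[rho_A^2] is real, we take its real part *)
Definition conc_ent {R : realType} {n : nat} (psi : qstate R n) : R :=
  1 - (2%:R ^+ n)^-1 * \sum_(A : {set 'I_n}) complex.Re (purity psi A).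

(* Main.v *)
Require Import Defs.
From HB Require Import structures.
From mathcomp Require Import all_boot all_order all_algebra.
From mathcomp Require Import all_classical all_reals all_analysis.
From mathcomp Require Import complex.
From mathcomp Require Import ring lra.
Import Order.TTheory GRing.Theory Num.Theory numFieldNormedType.Exports.
Local Open Scope ring_scope.
Lemma amgm_step (C : numDomainType) (r : nat) (T t P : C) :
  0 <= T -> 0 <= t -> 0 <= P -> T ^+ 2 <= r%:R * P ->
  (T + t) ^+ 2 <= r.+1%:R * (P + t ^+ 2).
Proof.
move=> T0 t0 P0 hT.
have Tr : T \is Num.real by apply: ger0_real.
have tr : t \is Num.real by apply: ger0_real.
case: r hT => [|r] hT.
  have T20 : T ^+ 2 = 0.
    apply/le_anti; rewrite (le_trans hT) ?mul0r //.
    exact: real_exprn_even_ge0.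
  have -> : T = 0 by apply/eqP; move: T20 => /eqP; rewrite expf_eq0.
  by rewrite add0r mul1r lerDr.
have r0 : (0 : C) < r.+1%:R by rewrite ltr0n.
rewrite -(ler_pM2l r0).
have h1 : r.+2%:R * T ^+ 2 <= r.+2%:R * (r.+1%:R * P) :> C.
  by rewrite ler_wpM2l.
have hsq : 0 <= (T - r.+1%:R * t) ^+ 2.
  apply: real_exprn_even_ge0 => //.
  by rewrite rpredB // rpredM // realn.
rewrite -subr_ge0.
apply: le_trans (_ : 0 <= r.+2%:R * (r.+1%:R * P) - r.+2%:R * T ^+ 2 + (T - r.+1%:R * t) ^+ 2) _.
  by rewrite addr_ge0 // subr_ge0.
rewrite le_eqVlt; apply/orP; left; apply/eqP.
rewrite -!natr1; ring.
Qed.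

Definition ipr {C : numClosedFieldType} {J : finType} (PB : pred J)
  (f g : J -> C) : C := \sum_(b | PB b) f b * (g b)^*.

Definition rho {C : numClosedFieldType} {I J : finType} (PB : pred J)
  (psi : I -> J -> C) (a a' : I) : C := ipr PB (psi a) (psi a').

Definition trr {C : numClosedFieldType} {I J : finType} (PA : pred I) (PB : pred J)
  (psi : I -> J -> C) : C := \sum_(a | PA a) rho PB psi a a.

Definition pur {C : numClosedFieldType} {I J : finType} (PA : pred I) (PB : pred J)
  (psi : I -> J -> C) : C :=
  \sum_(a | PA a) \sum_(a' | PA a') rho PB psi a a' * rho PB psi a' a.

Lemma iprC (C : numClosedFieldType) (J : finType) (PB : pred J) (f g : J -> C) :
  ipr PB g f = (ipr PB f g)^*.
Proof.
rewrite /ipr rmorph_sum; apply: eq_bigr => b _.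
rewrite rmorphM /= conjCK mulrC. done.
Qed.

Lemma ipr_ge0 (C : numClosedFieldType) (J : finType) (PB : pred J) (f : J -> C) :
  0 <= ipr PB f f.
Proof. by apply: sumr_ge0 => b _; apply: mul_conjC_ge0. Qed.

Lemma pur_ge0 (C : numClosedFieldType) (I J : finType) (PA : pred I) (PB : pred J)
  (psi : I -> J -> C) : 0 <= pur PA PB psi.
Proof.
apply: sumr_ge0 => a _; apply: sumr_ge0 => a' _.
by rewrite /rho (iprC _ _ PB (psi a) (psi a')) mul_conjC_ge0.
Qed.

Lemma trr_ge0 (C : numClosedFieldType) (I J : finType) (PA : pred I) (PB : pred J)
  (psi : I -> J -> C) : 0 <= trr PA PB psi.
Proof. by apply: sumr_ge0 => a _; apply: ipr_ge0. Qed.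

Lemma ipr_expand (C : numClosedFieldType) (J : finType) (PB : pred J)
  (f g e : J -> C) (c d : C) :
  ipr PB (fun b => f b + c * e b) (fun b => g b + d * e b) =
  ipr PB f g + d^* * ipr PB f e + c * ipr PB e g + c * d^* * ipr PB e e.
Proof.
rewrite /ipr !mulr_sumr -!big_split /=; apply: eq_bigr => b _.
rewrite rmorphD rmorphM /=; ring.
Qed.

Lemma core_ineq (C : numClosedFieldType) (I J : finType) (PA : pred I) (PB : pred J)
  (r : nat) :
  forall (psi : I -> J -> C) (u : 'I_r -> I -> C) (v : 'I_r -> J -> C),
  (forall a b, PA a -> PB b -> psi a b = \sum_(i < r) u i a * v i b) ->
  trr PA PB psi ^+ 2 <= r%:R * pur PA PB psi.
Proof.
elim: r => [|r IH] psi u v hdec.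
  have -> : trr PA PB psi = 0.
    apply: big1 => a Pa; apply: big1 => b Pb.
    by rewrite hdec // big_ord0 mul0r.
  by rewrite expr0n /= mul0r.
pose w (i : 'I_r) := widen_ord (leqnSn r) i.
pose e := v ord_max.
pose E := ipr PB e e.
have E0 : 0 <= E by apply: ipr_ge0.
have hdec' : forall a b, PA a -> PB b ->
    psi a b = \sum_(i < r) u (w i) a * v (w i) b + u ord_max a * e b.
  by move=> a b Pa Pb; rewrite hdec // big_ord_recr.
case: (eqVneq E 0) => [Ez|Enz].
  have ez : forall b, PB b -> e b = 0.
    move=> b Pb.
    have := psumr_eq0P (fun b _ => mul_conjC_ge0 (e b)) Ez Pb.
    by move/eqP; rewrite mul_conjC_eq0 => /eqP.
  apply: le_trans (IH psi (fun i => u (w i)) (fun i => v (w i)) _) _.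
    by move=> a b Pa Pb; rewrite hdec' // ez // mulr0 addr0.
  by apply: ler_wpM2r; [exact: pur_ge0 | rewrite ler_nat].
pose al i := ipr PB (v (w i)) e / E.
pose v' i b := v (w i) b - al i * e b.
pose x a := u ord_max a + \sum_(i < r) al i * u (w i) a.
pose psi' a b := \sum_(i < r) u (w i) a * v' i b.
have horth : forall i, ipr PB (v' i) e = 0.
  move=> i.
  have -> : ipr PB (v' i) e = ipr PB (v (w i)) e - al i * E.
    rewrite /E /ipr mulr_sumr -sumrB; apply: eq_bigr => b _; rewrite /v'; ring.
  by rewrite /al divfK ?subrr.
have horth2 : forall a, ipr PB (psi' a) e = 0.
  move=> a.
  transitivity (\sum_(i < r) u (w i) a * ipr PB (v' i) e).
    rewrite /ipr /psi'.
    under eq_bigr do rewrite mulr_suml.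
    rewrite exchange_big /=; apply: eq_bigr => i _; rewrite mulr_sumr.
    by apply: eq_bigr => b _; rewrite mulrA.
  by apply: big1 => i _; rewrite horth mulr0.
have horth3 : forall a, ipr PB e (psi' a) = 0.
  by move=> a; rewrite iprC horth2 conjC0.
have hdec2 : forall a b, PA a -> PB b -> psi a b = psi' a b + x a * e b.
  move=> a b Pa Pb; rewrite hdec' // /psi' /x mulrDl mulr_suml.
  rewrite addrCA -big_split /= addrC; congr (_ + _).
  by apply: eq_bigr => i _; rewrite /v'; ring.
have hrho : forall a a', PA a -> PA a' ->
    rho PB psi a a' = rho PB psi' a a' + E * (x a * (x a')^*).
  move=> a a' Pa Pa'.
  transitivity (ipr PB (fun b => psi' a b + x a * e b) (fun b => psi' a' b + x a' * e b)).
    by rewrite /rho /ipr; apply: eq_bigr => b Pb; rewrite !hdec2.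
  rewrite ipr_expand horth2 horth3 /rho -/E; ring.
have htr : trr PA PB psi = trr PA PB psi' + E * ipr PA x x.
  rewrite /trr /ipr mulr_sumr -big_split /=; apply: eq_bigr => a Pa.
  by rewrite hrho.
pose Q := \sum_(a | PA a) \sum_(a' | PA a') rho PB psi' a a' * (x a' * (x a)^*).
have hQ : 0 <= Q.
  have -> : Q = ipr PB (fun b => \sum_(a | PA a) psi' a b * (x a)^*)
                       (fun b => \sum_(a | PA a) psi' a b * (x a)^*).
    rewrite /Q.
    transitivity (\sum_(a | PA a) \sum_(a' | PA a') \sum_(b | PB b)
                    psi' a b * (psi' a' b)^* * (x a' * (x a)^*)).
      by apply: eq_bigr => a _; apply: eq_bigr => a' _; rewrite /rho /ipr mulr_suml.
    under eq_bigr do rewrite exchange_big.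
    rewrite exchange_big /ipr; apply: eq_bigr => b _.
    rewrite rmorph_sum mulr_suml; apply: eq_bigr => a _.
    rewrite mulr_sumr; apply: eq_bigr => a' _.
    rewrite rmorphM /= conjCK; ring.
  exact: ipr_ge0.
have hQ' : \sum_(a | PA a) \sum_(a' | PA a') (x a * (x a')^*) * rho PB psi' a' a = Q.
  by rewrite /Q exchange_big; apply: eq_bigr => a _; apply: eq_bigr => a' _; rewrite mulrC.
have hpur : pur PA PB psi = pur PA PB psi' + E * Q + E * Q + (E * ipr PA x x) ^+ 2.
  rewrite /pur.
  transitivity (\sum_(a | PA a) \sum_(a' | PA a')
      (rho PB psi' a a' * rho PB psi' a' a
       + E * (rho PB psi' a a' * (x a' * (x a)^*))
       + E * ((x a * (x a')^*) * rho PB psi' a' a)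
       + (E * (x a * (x a)^*)) * (E * (x a' * (x a')^*)))).
    by apply: eq_bigr => a Pa; apply: eq_bigr => a' Pa'; rewrite !hrho //; ring.
  under eq_bigr do rewrite !big_split /=.
  rewrite !big_split /=.
  congr (_ + _ + _ + _).
  - by rewrite /Q mulr_sumr; apply: eq_bigr => a _; rewrite mulr_sumr.
  - by rewrite -hQ' mulr_sumr; apply: eq_bigr => a _; rewrite mulr_sumr.
  - rewrite /ipr expr2 mulr_sumr mulr_suml; apply: eq_bigr => a _.
    by rewrite mulr_sumr.
rewrite htr.
have t0 : 0 <= E * ipr PA x x by rewrite mulr_ge0 // ipr_ge0.
have IH' := IH psi' (fun i => u (w i)) v' (fun a b _ _ => erefl).
have := @amgm_step _ r _ _ _ (trr_ge0 _ _ _ PA PB psi') t0 (pur_ge0 _ _ _ PA PB psi') IH'.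
move/le_trans; apply.
rewrite ler_wpM2l // hpur -!addrA lerD2l addrA lerDr.
by rewrite addr_ge0 // mulr_ge0.
Qed.
Definition restr {n : nat} (S : {set 'I_n}) (s : bits n) : bits n :=
  [ffun i => (i \in S) && s i].

Lemma supported_restr n (S : {set 'I_n}) s : supported S (restr S s).
Proof.
by apply/forallP => i; apply/implyP => hi; rewrite ffunE (negbTE hi).
Qed.

Lemma sum_merge (V : nmodType) n (A : {set 'I_n}) (F : bits n -> V) :
  \sum_(s : bits n) F s =
  \sum_(a | supported A a) \sum_(b | supported (~: A) b) F (Defs.merge A a b).
Proof.
rewrite (partition_big (restr A) (supported A)) /=; last first.
  by move=> s _; apply: supported_restr.
apply: eq_bigr => a Sa.
rewrite (reindex_onto (Defs.merge A a) (restr (~: A))) /=; last first.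
  move=> s /eqP hs; apply/ffunP => i; rewrite !ffunE.
  case: (boolP (i \in A)) => hi.
    by rewrite -hs ffunE hi.
  by rewrite finset.in_setC hi.
apply: eq_bigl => b.
have -> : restr A (Defs.merge A a b) == a.
  apply/eqP/ffunP => i; rewrite !ffunE.
  case: (boolP (i \in A)) => hi //=.
  by move/forallP: Sa => /(_ i) /implyP /(_ hi) /negbTE ->.
rewrite /=.
apply/eqP/forallP => [H i|H].
  apply/implyP; rewrite finset.in_setC negbK => hi.
  by move/ffunP: H => /(_ i); rewrite !ffunE finset.in_setC hi /= => <-.
apply/ffunP => i; rewrite !ffunE finset.in_setC.
case: (boolP (i \in A)) => hi //=.
by move: (H i); rewrite finset.in_setC hi /= => /negbTE ->.
Qed.

Lemma merge_decomp (R : realType) n (psi : qstate R n) r (c : 'I_r -> R[i])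
  (phi : 'I_r -> 'I_n -> bool -> R[i])
  (hd : forall s, psi s = \sum_(i < r) c i * prod_vec (phi i) s)
  (A : {set 'I_n}) (a b : bits n) :
  psi (Defs.merge A a b) =
  \sum_(i < r) (c i * \prod_(j | j \in A) phi i j (a j)) *
               (\prod_(j | j \notin A) phi i j (b j)).
Proof.
rewrite hd; apply: eq_bigr => i _; rewrite /prod_vec (bigID (mem A)) /= -mulrA.
congr (_ * (_ * _)); apply: eq_bigr => j hj; rewrite ffunE.
  by rewrite hj.
by rewrite (negbTE hj).
Qed.

Lemma ReD' (R : realType) (x y : R[i]) :
  complex.Re (x + y) = complex.Re x + complex.Re y.
Proof. by case: x => ? ?; case: y. Qed.

Lemma Re_natmul (R : realType) (p : R[i]) (r : nat) :
  complex.Re (r%:R * p) = r%:R * complex.Re p.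
Proof.
rewrite mulr_natl mulr_natl; elim: r => [|r IH]; first by rewrite !mulr0n.
by rewrite !mulrS ReD' IH.
Qed.

Lemma purity_ge (R : realType) n (psi : qstate R n) (r : nat) (hr : (0 < r)%N) :
  is_pure_state psi -> has_cp_decomp psi r ->
  forall A, r%:R^-1 <= complex.Re (purity psi A).
Proof.
move=> hpure hcp A; case: hcp => c [phi hd].
have key := @core_ineq _ _ _ (supported A) (supported (~: A)) r
  (fun a b => psi (Defs.merge A a b))
  (fun i a => c i * \prod_(j | j \in A) phi i j (a j))
  (fun i b => \prod_(j | j \notin A) phi i j (b j))
  (fun a b _ _ => @merge_decomp _ _ _ _ _ _ hd A a b).
have htr : trr (supported A) (supported (~: A)) (fun a b => psi (Defs.merge A a b)) = 1.
  by rewrite -hpure (@sum_merge _ _ A (fun s => psi s * (psi s)^*)).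
rewrite -/(purity psi A) in key.
rewrite htr expr1n in key.
move: key; rewrite lecE => /andP [_].
rewrite Re_natmul /= => h.
have r0 : (0:R) < r%:R by rewrite ltr0n.
by rewrite -(ler_pM2l r0) mulfV ?gt_eqF.
Qed.
Local Open Scope classical_set_scope.
Lemma conc_ent_le (R : realType) n (psi : qstate R n) (r : nat) (hr : (0 < r)%N) :
  is_pure_state psi -> has_cp_decomp psi r -> conc_ent psi <= (r%:R - 1) / r%:R.
Proof.
move=> hp hc; rewrite /conc_ent.
have hs : (2%:R ^+ n : R) * r%:R^-1 <= \sum_(A : {set 'I_n}) complex.Re (purity psi A).
  apply: le_trans (_ : \sum_(A : {set 'I_n}) r%:R^-1 <= _).
    rewrite sumr_const -cardsT -powersetT card_powerset cardsT card_ord.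
    by rewrite -[X in _ <= X]mulr_natl natrX.
  by apply: ler_sum => A _; apply: purity_ge.
have p0 : 0 < (2%:R ^+ n : R) by rewrite exprn_gt0.
have r0 : (0 : R) < r%:R by rewrite ltr0n.
have -> : (r%:R - 1) / r%:R = 1 - (2%:R ^+ n)^-1 * ((2%:R ^+ n) * r%:R^-1) :> R.
  by field; rewrite ?gt_eqF.
by rewrite lerD2l lerN2 ler_wpM2l // invr_ge0 ltW.
Qed.

Lemma limn_esup_le_all (R : realType) (u : (\bar R)^nat) (l : \bar R) :
  (forall n, (u n <= l)%E) -> (limn_esup u <= l)%E.
Proof.
move=> hu; rewrite /limn_esup /limf_esup.
apply: le_trans; first apply: ereal_inf_lbound.
  by exists setT; [exact: filterT | reflexivity].
by apply: ge_ereal_sup => _ [n _ <-].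
Qed.

Lemma binom_half (R : realType) n :
  \sum_(k < n.+1) ('C(n, k))%:R * (2%:R ^+ k)^-1 = (3%:R / 2%:R) ^+ n :> R.
Proof.
have -> : (3%:R / 2%:R : R) = 1 + 2%:R^-1 by field.
rewrite [RHS](exprDn (1 : R)); apply: eq_bigr => k _.
by rewrite expr1n mul1r exprVn mulr_natl.
Qed.

Lemma binom_half' (R : realType) n :
  \sum_(k < n.+1) ('C(n, k))%:R * (2%:R ^+ (n - k))^-1 = (3%:R / 2%:R) ^+ n :> R.
Proof.
have -> : (3%:R / 2%:R : R) = 2%:R^-1 + 1 by field.
rewrite [RHS](exprDn (2%:R^-1 : R)); apply: eq_bigr => k _.
by rewrite expr1n mulr1 exprVn mulr_natl.
Qed.

Lemma binom_sum (R : realType) n :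
  \sum_(k < n.+1) ('C(n, k))%:R = 2%:R ^+ n :> R.
Proof.
have -> : (2%:R : R) = 1 + 1 by rewrite -natr1.
rewrite [RHS](exprDn (1 : R)); apply: eq_bigr => k _.
by rewrite !expr1n mulr1.
Qed.

Lemma bR_cvg (R : realType) Rk (hRk : (0 < Rk)%N) :
  (fun n => @bR R Rk n) @ \oo --> ((Rk%:R - 1) / Rk%:R : R).
Proof.
set a : R := Rk%:R^-1.
have a0 : 0 <= a by rewrite invr_ge0 ler0n.
have hS : forall n, 1 - @bR R Rk n = (2%:R ^+ n)^-1 *
   \sum_(k < n.+1) ('C(n, k))%:R * Num.max a ((2%:R ^+ minn k (n - k))^-1).
  by move=> n; rewrite /bR big_mkord; ring.
have p0 n : 0 < (2%:R ^+ n : R) by rewrite exprn_gt0.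
have lo n : a <= 1 - bR Rk n.
  rewrite hS.
  apply: le_trans (_ : (2%:R ^+ n)^-1 * \sum_(k < n.+1) ('C(n, k))%:R * a <= _).
    by rewrite -mulr_suml binom_sum mulrA mulVf ?gt_eqF // mul1r.
  apply: ler_wpM2l; first by rewrite invr_ge0 ltW.
  apply: ler_sum => k _.
  by apply: ler_wpM2l => //; rewrite le_max lexx.
have hi n : 1 - bR Rk n <= a + 2%:R * (3%:R / 4%:R) ^+ n.
  rewrite hS.
  apply: le_trans (_ : (2%:R ^+ n)^-1 * \sum_(k < n.+1) (('C(n, k))%:R * a +
      (('C(n, k))%:R * (2%:R ^+ k)^-1 + ('C(n, k))%:R * (2%:R ^+ (n - k))^-1)) <= _).
    apply: ler_wpM2l; first by rewrite invr_ge0 ltW.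
  apply: ler_sum => k _.
    rewrite -!mulrDr; apply: ler_wpM2l => //.
    rewrite ge_max; apply/andP; split.
      by rewrite lerDl addr_ge0 // invr_ge0 ltW.
    apply: le_trans (_ : _ <= (2%:R ^+ k)^-1 + (2%:R ^+ (n - k))^-1) _; last first.
      by rewrite lerDr.
    rewrite /minn; case: ltnP => h.
      by rewrite lerDl invr_ge0 ltW.
    by rewrite lerDr invr_ge0 ltW.
  rewrite !big_split /= -mulr_suml binom_sum binom_half binom_half'.
  have -> : (3%:R / 4%:R : R) ^+ n = (3%:R / 2%:R) ^+ n / 2%:R ^+ n.
    by rewrite -expr_div_n; congr (_ ^+ _); field.
  rewrite le_eqVlt; apply/orP; left; apply/eqP.
  field; rewrite gt_eqF //.
have hc : (fun n => 1 - bR Rk n) @ \oo --> a.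
  apply: (@squeeze_cvgr _ _ _ _ (fun=> a) (fun n => a + 2%:R * (3%:R / 4%:R) ^+ n)).
  - by apply: nearW => n; rewrite lo hi.
  - exact: cvg_cst.
  - rewrite -[X in _ --> X]addr0; apply: cvgD; first exact: cvg_cst.
    rewrite -(mulr0 2%:R); apply: cvgMl_tmp; apply: cvg_expr.
    by rewrite ger0_norm ?divr_ge0 // ltr_pdivrMr // mul1r ltr_nat.
have -> : (Rk%:R - 1) / Rk%:R = 1 - a.
  by rewrite /a; field; rewrite pnatr_eq0 -lt0n.
have -> : (fun n => @bR R Rk n) = (fun n => 1 - (1 - @bR R Rk n)).
  by rewrite funeqE => n; rewrite subKr.
apply: cvgB => //; exact: cvg_cst.
Qed.

Theorem corollary2 (R : realType) (Rk : nat) (hRk : (0 < Rk)%N) :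
  (fun n => @bR R Rk n) @ \oo --> ((Rk%:R - 1) / Rk%:R : R)
  /\
  (limn_esup (fun n : nat =>
      ereal_sup [set (conc_ent psi)%:E
                | psi in [set psi : qstate R n | is_pure_state psi /\ cp_rank_eq psi Rk]])
   <= ((Rk%:R - 1) / Rk%:R)%:E)%E.
Proof.
split; first exact: bR_cvg.
apply: limn_esup_le_all => n.
apply: ge_ereal_sup => _ [psi [hp [hc _]] <-].
by rewrite lee_fin; apply: conc_ent_le.
Qed.
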